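(* Let $\iota:\emptyset\to\{\bullet\}$ and let $\sigma:S\to\{\bullet\}$ be the map from the Sierpinski space $S=\{o,c\}$ (open sets $\emptyset,\{o\},S$) to a point. Then, in $\mathrm{Top}$, $\{\iota\}^{rrrr}=\{\sigma\}^r$, and this is the class of continuous maps $f:X\to Y$ such that each fibre $f^{-1}(y)$, $y\in Y$, with the subspace topology satisfies the separation axiom $T_1$.
   Context: For continuous maps $f:A\to B$, $g:C\to D$, $f\pitchfork g$ means: for all continuous $t:A\to C$, $b:B\to D$ with $g\circ t=b\circ f$ there is continuous $d:B\to C$ with $d\circ f=t$, $g\circ d=b$. For a class $P$, $P^r=\{g: f\pitchfork g\ \forall f\in P\}$ and $P^{rrrr}=(((P^r)^r)^r)^r$. *)

(* Defs.v *)
From HB Require Import structures.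
From mathcomp Require Import all_boot all_classical all_reals.
From mathcomp Require Import topology initial_topology separation_axioms.

Unset Implicit Arguments.
Unset Strict Implicit.
Unset Printing Implicit Defensive.

Local Open Scope classical_set_scope.

(** A class of morphisms of Top: a predicate on maps between topological
    spaces (only continuous maps are ever considered, see [rorth]). *)
Definition mclass := forall (A B : topologicalType), (A -> B) -> Prop.

Definition lifts {A B C D : topologicalType} (f : A -> B) (g : C -> D) : Prop :=
  forall (t : A -> C) (b : B -> D), continuous t -> continuous b ->
    g \o t = b \o f ->
    exists d : B -> C, [/\ continuous d, d \o f = t & g \o d = b].

Definition rorth (P : mclass) : mclass :=
  fun C D g => continuous g /\ forall (A B : topologicalType) (f : A -> B),
    P A B f -> lifts f g.

Definition rorth4 (P : mclass) : mclass := rorth (rorth (rorth (rorth P))).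

Definition single {X Y : topologicalType} (h : X -> Y) : mclass :=
  fun A B f => existT (fun p : topologicalType * topologicalType => p.1 -> p.2)
                      (A, B) f
             = existT (fun p : topologicalType * topologicalType => p.1 -> p.2)
                      (X, Y) h.

(** The empty space and the one-point space (each carries a unique topology). *)
Definition emptysp : topologicalType := discrete_topology void.
Definition pointsp : topologicalType := discrete_topology unit.

(** Sierpinski space S = {o, c}: o := true, c := false;
    open sets are those U with (c ∈ U -> o ∈ U), i.e. ∅, {o}, S. *)
Definition sierpinski : Type := bool.
HB.instance Definition _ := Choice.copy sierpinski bool.

Definition sierp_open : set_system sierpinski :=
  fun U => U false -> U true.

Lemma sierp_openT : sierp_open setT.
Proof. by []. Qed.

Lemma sierp_openI : setI_closed sierp_open.
Proof. by move=> U V hU hV [/hU ? /hV ?]. Qed.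

Lemma sierp_open_bigU (I : Type) (f : I -> set sierpinski) :
  (forall i, sierp_open (f i)) -> sierp_open (\bigcup_i f i).
Proof. by move=> h [i _ fi]; exists i => //; apply: h. Qed.

HB.instance Definition _ := isOpenTopological.Build sierpinski
  sierp_openT sierp_openI sierp_open_bigU.

Definition sierpT : topologicalType := sierpinski.

Definition iota_map : emptysp -> pointsp := fun v => of_void unit v.
Definition sigma_map : sierpT -> pointsp := fun _ => tt.

(** The fibre f^{-1}(y) with the subspace (= initial) topology. *)
Definition fibre_space {X Y : topologicalType} (f : X -> Y) (y : Y)
  : topologicalType :=
  initial_topology (@proj1_sig X (fun x => x \in f @^-1` [set y])).

(* Main.v *)
Require Import Defs.
From HB Require Import structures.
From mathcomp Require Import all_boot all_classical all_reals.
From mathcomp Require Import topology initial_topology separation_axioms.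
Local Open Scope classical_set_scope.

Lemma sierp_cont (M : topologicalType) (T : sierpT -> M) :
  continuous T <-> forall U, open U -> U (T false) -> U (T true).
Proof.
split.
- move=> /continuousP cT U oU. exact: (cT U oU).
- move=> H; apply/continuousP => U oU. exact: H.
Qed.

Lemma disc_cont (T : choiceType) (M : topologicalType)
  (f : discrete_topology T -> M) : continuous f.
Proof. apply/continuousP => U _; exact: discrete_open. Qed.

Lemma single_iff (X Y C D : topologicalType) (h : X -> Y) (g : C -> D) :
  rorth (single h) C D g <-> continuous g /\ lifts h g.
Proof.
split.
- by move=> [cg H]; split => //; apply: H.
- move=> [cg L]; split => // A B f E.
  pose F (s : {p : topologicalType * topologicalType & p.1 -> p.2}) :=
    lifts (projT2 s) g.
  change (F (existT _ (A, B) f)); rewrite E; exact: L.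
Qed.

Lemma lifts_iota_surj (C D : topologicalType) (g : C -> D) :
  lifts iota_map g -> forall y, exists x, g x = y.
Proof.
move=> L y.
have c1 : continuous (fun v : emptysp => of_void C v) by move=> [].
have c2 : continuous (fun _ : pointsp => y) by exact: cst_continuous.
have e : g \o (fun v : emptysp => of_void C v) = (fun _ : pointsp => y) \o iota_map.
  by apply: funext => -[].
have [d [_ _ gd]] := L _ _ c1 c2 e; exists (d tt).
exact: (f_equal (fun F => F tt) gd).
Qed.

Lemma surj_lifts_iota (C D : topologicalType) (g : C -> D) :
  (forall y, exists x, g x = y) -> lifts iota_map g.
Proof.
move=> S t b _ _ _.
have [x gx] := S (b tt).
exists (fun _ => x); split.
- exact: cst_continuous.
- by apply: funext => -[].
- by apply: funext => -[].
Qed.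

Definition PC {M N : topologicalType} (m : M -> N) :=
  forall p q, m p = m q -> (forall U, open U -> U q -> U p) -> p = q.

Lemma lifts_sigma_PC (M N : topologicalType) (m : M -> N) :
  lifts sigma_map m <-> PC m.
Proof.
split.
- move=> L p q mpq H.
  have c1 : continuous (fun v : sierpT => if v then p else q) by apply/sierp_cont.
  have c2 : continuous (fun _ : pointsp => m p) by exact: cst_continuous.
  have e : m \o (fun v : sierpT => if v then p else q) = (fun _ : pointsp => m p) \o sigma_map.
    by apply: funext => -[].
  have [d [_ dT _]] := L _ _ c1 c2 e.
  have := f_equal (fun F => F true) dT; have := f_equal (fun F => F false) dT.
  by move=> /= <- <-.
- move=> P t b ct _ E.
  have mt v : m (t v) = b tt := f_equal (fun F => F v) E.
  have e : t true = t false.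
    apply: P; first by rewrite !mt.
    by move=> U oU; move/sierp_cont: ct => /(_ U oU).
  exists (fun _ => t true); split.
  + exact: cst_continuous.
  + by apply: funext => -[].
  + by apply: funext => -[]; rewrite /= mt.
Qed.

Lemma PC_fibre (M N : topologicalType) (m : M -> N) :
  PC m <-> forall y, accessible_space (fibre_space m y).
Proof.
split.
- move=> P y a b ab.
  have nab : proj1_sig a <> proj1_sig b.
    move=> e; move/eqP: ab; apply; move: a b e => [x hx] [z hz] /= e.
    by subst z; rewrite (Prop_irrelevance hx hz).
  have [U [oU Ua nUb]] : exists U, [/\ open U, U (proj1_sig a) & ~ U (proj1_sig b)].
    apply: contrapT => H; apply: nab; apply: esym; apply: P.
    + clear H; case: a b {ab} => [x +] [z +]; rewrite /= !inE /= => -> -> //.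
    + move=> U oU Ua; apply: contrapT => nUb; apply: H; by exists U.
  exists (@proj1_sig M _ @^-1` U); split.
  + by exists U.
  + by rewrite inE.
  + by rewrite inE.
- move=> A p q mpq H; apply: contrapT => npq.
  have hp : p \in m @^-1` [set m p] by rewrite inE.
  have hq : q \in m @^-1` [set m p] by rewrite inE /= mpq.
  have [] := A (m p) (exist _ q hq) (exist _ p hp).
    by apply/eqP => -[e]; apply: npq.
  move=> W [[U oU <-]] Wq Wp.
  rewrite !inE /= in Wq Wp.
  by apply: Wp; apply: H.
Qed.

Lemma sigma_rrr : rorth (rorth (rorth (single iota_map))) sierpT pointsp sigma_map.
Proof.
split; first exact: cst_continuous.
move=> A B h [ch H] t b ct _ _.
pose W := initial_topology h.
have cg : continuous (id : A -> W).
  apply: continuous_comp_initial; exact: ch.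
have rg : rorth (single iota_map) A W (id : A -> W).
  apply/single_iff; split => //; apply: surj_lifts_iota => y; by exists y.
have cb : continuous (h : W -> B) by exact: initial_continuous.
have e : h \o (id : A -> A) = (h : W -> B) \o (id : A -> W) by [].
have [d [cd dg _]] := H _ _ _ rg id (h : W -> B) (fun x => fun U (hU : _) => hU) cb e.
have dE x : d x = x := f_equal (fun F => F x) dg.
have oU : open (t @^-1` [set true]).
  by move/continuousP: ct; apply => /=.
have : open (d @^-1` (t @^-1` [set true]) : set W).
  by move/continuousP: cd; apply.
move=> [V oV eV].
have eV' x : V (h x) <-> t x = true.
  have := f_equal (fun S => S x) eV; rewrite /= dE => ->; by [].
exists (fun y => `[< V y >]); split.
- apply/continuousP => O oO.
  have [Of|Onf] := pselect (O false).
    have Ot : O true by exact: oO.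
    suff -> : (fun y => `[< V y >]) @^-1` O = setT by exact: openT.
    by apply/seteqP; split => // y _ /=; case: asboolP.
  have [Ot|Ont] := pselect (O true).
    suff -> : (fun y => `[< V y >]) @^-1` O = V by [].
    apply/seteqP; split => y /=; case: asboolP => //.
  suff -> : (fun y => `[< V y >]) @^-1` O = set0 by exact: open0.
  by apply/seteqP; split => y //=; case: asboolP.
- apply: funext => x /=; case: asboolP => /eV'; case: (t x) => // H1; exfalso; apply: H1; exact/eV'.
- by apply: funext => x; case: (b x).
Qed.

Definition zsp0 : Type := option bool.
HB.instance Definition _ := Choice.copy zsp0 (option bool).
Definition z_open : set_system zsp0 :=
  fun U => U None -> U (Some true) /\ U (Some false).
Lemma z_openT : z_open setT. Proof. by []. Qed.
Lemma z_openI : setI_closed z_open.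
Proof. by move=> U V hU hV [/hU [? ?] /hV [? ?]]. Qed.
Lemma z_open_bigU (I : Type) (f : I -> set zsp0) :
  (forall i, z_open (f i)) -> z_open (\bigcup_i f i).
Proof. by move=> h [i _ fi]; have [? ?] := h i fi; split; exists i. Qed.
HB.instance Definition _ := isOpenTopological.Build zsp0 z_openT z_openI z_open_bigU.
Definition zsp : topologicalType := zsp0.
Definition D2 : topologicalType := discrete_topology bool.
Definition h1 : D2 -> zsp := fun v => Some v.

Lemma h1_rr : rorth (rorth (single iota_map)) D2 zsp h1.
Proof.
split; first exact: disc_cont.
move=> A B g /single_iff [_ /lifts_iota_surj S] t b _ cb E.
have bE a : b (g a) = Some (t a) := esym (f_equal (fun F => F a) E).
pose d y : D2 := if b y is Some v then v else true.
have bd y : b y = Some (d y).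
  by have [a <-] := S y; rewrite /d bE.
exists d; split.
- apply/continuousP => O _.
  suff -> : d @^-1` O = b @^-1` [set z | exists2 v, O v & z = Some v].
    have zo : z_open [set z | exists2 v, O v & z = Some v] by move=> [v _].
    by move/continuousP: cb; apply; exact: zo.
  apply/seteqP; split => y /=; first by move=> ?; exists (d y) => //.
  by move=> [v Ov]; rewrite bd => -[->].
- by apply: funext => a /=; rewrite /d bE.
- by apply: funext => y /=; rewrite bd.
Qed.

Lemma h0_rr (Y : topologicalType) :
  rorth (rorth (single iota_map)) emptysp Y (fun v => of_void Y v).
Proof.
split; first by move=> [].
move=> A B g /single_iff [_ /lifts_iota_surj S] t b _ _ _.
have d : B -> emptysp.
  move=> y; exfalso; have [a _] := S y; case: (t a).
exists d; split.
- by move=> y; case: (d y).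
- by apply: funext => a; case: (t a).
- by apply: funext => y; case: (d y).
Qed.

Lemma sigma_rrrr (M N : topologicalType) (m : M -> N) :
  continuous m -> PC m -> rorth4 (single iota_map) M N m.
Proof.
move=> cm P; split => // X Y k [ck Hk] t b ct cb E.
have mt x : m (t x) = b (k x) := f_equal (fun F => F x) E.
have c1 : continuous (fun v : emptysp => of_void X v) by move=> [].
have c2 : continuous (fun y : Y => y) by move=> y U.
have e0 : k \o (fun v : emptysp => of_void X v) = (fun y : Y => y) \o (fun v => of_void Y v).
  by apply: funext => -[].
have [s [cs _ ks]] := Hk _ _ _ (h0_rr Y) _ _ c1 c2 e0.
have ksE y : k (s y) = y := f_equal (fun F => F y) ks.
have key x : t (s (k x)) = t x.
  pose tt0 : D2 -> X := fun v => if v then x else s (k x).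
  have c3 : continuous tt0 by exact: disc_cont.
  have c4 : continuous (fun _ : zsp => k x) by exact: cst_continuous.
  have e1 : k \o tt0 = (fun _ : zsp => k x) \o h1.
    by apply: funext => -[] //=; rewrite ksE.
  have [dd [cdd ddh kdd]] := Hk _ _ _ h1_rr _ _ c3 c4 e1.
  have ddE v : dd (Some v) = tt0 v := f_equal (fun F => F v) ddh.
  have kddE z : k (dd z) = k x := f_equal (fun F => F z) kdd.
  have ctd : continuous (t \o dd) by move=> z; apply: continuous_comp; [exact: cdd|exact: ct].
  have W v : t (dd (Some v)) = t (dd None).
    apply: P; first by rewrite !mt !kddE.
    move=> U oU UN.
    have : open ((t \o dd) @^-1` U) by move/continuousP: ctd; apply.
    by move=> /(_ UN) [] /=; case: v.
  by have := W true; have := W false; rewrite !ddE /= => -> ->.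
exists (t \o s); split.
- by move=> y; apply: continuous_comp; [exact: cs|exact: ct].
- by apply: funext => x /=; rewrite key.
- by apply: funext => y /=; rewrite mt ksE.
Qed.

Theorem mainTheorem13 :
  (forall (X Y : topologicalType) (f : X -> Y),
      rorth4 (single iota_map) X Y f <-> rorth (single sigma_map) X Y f) /\
  (forall (X Y : topologicalType) (f : X -> Y),
      rorth (single sigma_map) X Y f <->
      (continuous f /\ forall y : Y, accessible_space (fibre_space f y))).
Proof.
split => X Y f.
- split.
  + move=> [cf H]; apply/single_iff; split => //.
    exact: (H _ _ _ sigma_rrr).
  + move/single_iff => [cf /lifts_sigma_PC P]; exact: sigma_rrrr.
- split.
  + by move/single_iff => [cf /lifts_sigma_PC /PC_fibre A].
  + move=> [cf /PC_fibre /lifts_sigma_PC L]; exact/single_iff.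
Qed.
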